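(* Let $\tau^R=\big(\tfrac12+\tfrac{\sqrt3}{2}i,\ (\tfrac12+\tfrac{\sqrt3}{6}i,\ \tfrac{\sqrt6}{3})\big)$ be the normalized regular tetrahedron and $\tau^C=\big(\tfrac12+\tfrac12 i,\ (\tfrac12+\tfrac12 i,\ \tfrac{\sqrt2}{2})\big)$ the normalization of the cube corner tetrahedron with vertices $(0,0,0),(1,0,0),(0,1,0),(0,0,1)$. Then $\tau^C\in\Gamma_{\tau^R}$, and hence $\Gamma_{\tau^C}\subseteq\Gamma_{\tau^R}$. Explicitly, $\tau^C$ is reached from $\tau^R$ via $\Phi_L(\tau^R)=\Phi_R(\tau^R)=\big(\tfrac14+\tfrac{\sqrt3}{4}i,(\tfrac12+\tfrac{\sqrt3}{6}i,\tfrac{\sqrt6}{3})\big)\xrightarrow{\Phi_R}\big(\tfrac14+\tfrac{\sqrt3}{4}i,(\tfrac12+\tfrac{\sqrt3}{3}i,\tfrac{\sqrt6}{6})\big)\xrightarrow{\Phi_L}\big(\tfrac12+\tfrac{\sqrt3}{6}i,(\tfrac13,\tfrac{\sqrt2}{3})\big)\xrightarrow{\Phi_R}\big(\tfrac12+\tfrac{\sqrt2}{4}i,(\tfrac12+\tfrac{\sqrt2}{4}i,\tfrac{\sqrt2}{4})\big)\xrightarrow{\Phi_L}\big(\tfrac14+\tfrac{\sqrt3}{4}i,(\tfrac12+\tfrac{\sqrt3}{6}i,\tfrac{\sqrt6}{6})\big)\xrightarrow{\Phi_L}\big(\tfrac12+\tfrac12 i,(\tfrac12,\tfrac12)\bi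g)\xrightarrow{\Phi_L}\tau^C$.
   Context: Let $\mathcal S$ be the set of non-degenerate tetrahedra in $\mathbb R^3$. Let $\mathcal B=\{z\in\mathbb C:\ \Im z>0,\ 0<\Re z\le \tfrac12,\ |z-1|\le 1\}$, for $z\in\mathcal B$ let $\mathcal V(z)=\{(w,t)\in\mathbb C\times\mathbb R_{>0}:\ |z|^2\le |w|^2+t^2\le 1,\ |z|^2\le |w-1|^2+t^2\le 1,\ |w-z|^2+t^2\le 1\}$, and $\mathcal T=\{(z,(w,t)):\ z\in\mathcal B,\ (w,t)\in\mathcal V(z)\}$. Normalization $N:\mathcal S\to\mathcal T$: given $T\in\mathcal S$, choose a longest edge and label its endpoints $A,B$ and a third vertex $C$ so that $AC$ is a shortest edge among the four edges sharing exactly one endpoint with $AB$ (relabelling $A\leftrightarrow B$ if needed); if several labellings qualify, choose one minimizing $\angle BAC$; remaining ties are resolved arbitrarily. Let $D$ be the fourth vertex. Apply the similarity (translation, rotation, scaling by $1/|AB|$) sending $A\mapsto(0,0,0)$, $B\mapsto(1,0,0)$, $C\mapsto(c_1,c_2,0)$ with $c_2>0$; then $D\mapsto(d_1,d_2,d_3)$, and $N(T)=(c_1+ic_2,(d_1+id_2,|d_3|))$. LEB maps: for $\tau=(z,(w,t))\in\mathcal T$ with $z=z_1+iz_2$, $w=w_1+iw_2$, let $A=(0,0,0)$, $B=(1,0,0)$, $C=(z_1,z_2,0)$, $D=(w_1,w_2,t)$, $M=(\tfrac12,0,0)$. Define $\Phi_L(\tau)=N(AMCD)$ and $\Phi_R(\tau)=N(MBCD)$.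 The orbit of $\tau$ is $\Gamma_\tau=\bigcup_{n\ge0}\Gamma_\tau^{(n)}$ where $\Gamma_\tau^{(0)}=\{\tau\}$ and $\Gamma_\tau^{(n+1)}=\Phi_L(\Gamma_\tau^{(n)})\cup\Phi_R(\Gamma_\tau^{(n)})$. *)

(* Defs.v *)
From Stdlib Require Import Reals Lra Permutation List.
Import ListNotations.
Open Scope R_scope.

Record pt : Type := Pt { px : R; py : R; pz : R }.

Definition dot (p q : pt) : R := px p * px q + py p * py q + pz p * pz q.
Definition vsub (p q : pt) : pt := Pt (px p - px q) (py p - py q) (pz p - pz q).
Definition dist2 (p q : pt) : R := dot (vsub p q) (vsub p q).

Definition angle (B A C : pt) : R :=
  acos (dot (vsub B A) (vsub C A) / (sqrt (dist2 A B) * sqrt (dist2 A C))).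

Record tetra : Type := Tetra { v0 : pt; v1 : pt; v2 : pt; v3 : pt }.

Definition det3 (u v w : pt) : R :=
  px u * (py v * pz w - pz v * py w)
  - py u * (px v * pz w - pz v * px w)
  + pz u * (px v * py w - py v * px w).

Definition nondegenerate (T : tetra) : Prop :=
  det3 (vsub (v1 T) (v0 T)) (vsub (v2 T) (v0 T)) (vsub (v3 T) (v0 T)) <> 0.

Definition verts (T : tetra) : list pt := [v0 T; v1 T; v2 T; v3 T].

(** Elements (z, (w, t)) of C x (C x R) encoded as z = z1 + i z2, w = w1 + i w2. *)
Record tau : Type := Tau { z1 : R; z2 : R; w1 : R; w2 : R; tt : R }.

Definition inB (t : tau) : Prop :=
  0 < z2 t /\ 0 < z1 t /\ z1 t <= 1/2 /\ (z1 t - 1)^2 + z2 t ^2 <= 1.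

Definition inV (t : tau) : Prop :=
  let zz := z1 t ^2 + z2 t ^2 in
  0 < tt t /\
  zz <= w1 t ^2 + w2 t ^2 + tt t ^2 <= 1 /\
  zz <= (w1 t - 1)^2 + w2 t ^2 + tt t ^2 <= 1 /\
  (w1 t - z1 t)^2 + (w2 t - z2 t)^2 + tt t ^2 <= 1.

Definition inT (t : tau) : Prop := inB t /\ inV t.

Definition labelling (T : tetra) (A B C D : pt) : Prop :=
  Permutation [A; B; C; D] (verts T).

Definition qualifies (T : tetra) (A B C D : pt) : Prop :=
  labelling T A B C D /\
  (forall X Y, In X (verts T) -> In Y (verts T) -> dist2 X Y <= dist2 A B) /\
  dist2 A C <= dist2 A D /\ dist2 A C <= dist2 B C /\ dist2 A C <= dist2 B D.

(** The labellings admissible for the normalization: among qualifying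
    labellings, |AC| is minimal, and among those ∠BAC is minimal. Remaining ties are left free. *)
Definition admissible (T : tetra) (A B C D : pt) : Prop :=
  qualifies T A B C D /\
  (forall A' B' C' D', qualifies T A' B' C' D' -> dist2 A C <= dist2 A' C') /\
  (forall A' B' C' D', qualifies T A' B' C' D' -> dist2 A' C' = dist2 A C ->
      angle B A C <= angle B' A' C').

(** Normalized coordinates: the images A' = 0, B' = (1,0,0),
    C' = (c1,c2,0) with c2 > 0, D' = (d1,d2,d3) of A, B, C, D under a
    similarity of ratio 1/|AB|; a map of the four vertices with all
    distances scaled by 1/|AB| is exactly the restriction of such a
    similarity of R^3. *)
Definition normal_coords (A B C D : pt) (c1 c2 d1 d2 d3 : R) : Prop :=
  let A' := Pt 0 0 0 in
  let B' := Pt 1 0 0 in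
  let C' := Pt c1 c2 0 in
  let D' := Pt d1 d2 d3 in
  0 < c2 /\
  dist2 A' B' * dist2 A B = dist2 A B /\
  dist2 A' C' * dist2 A B = dist2 A C /\
  dist2 A' D' * dist2 A B = dist2 A D /\
  dist2 B' C' * dist2 A B = dist2 B C /\
  dist2 B' D' * dist2 A B = dist2 B D /\
  dist2 C' D' * dist2 A B = dist2 C D.

(** [is_normalization T τ]: τ is a possible value of N(T) (for some
    admissible resolution of ties). *)
Definition is_normalization (T : tetra) (t : tau) : Prop :=
  nondegenerate T /\
  exists A B C D c1 c2 d1 d2 d3,
    admissible T A B C D /\ normal_coords A B C D c1 c2 d1 d2 d3 /\
    t = Tau c1 c2 d1 d2 (Rabs d3).

Definition ptA (t : tau) : pt := Pt 0 0 0.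
Definition ptB (t : tau) : pt := Pt 1 0 0.
Definition ptC (t : tau) : pt := Pt (z1 t) (z2 t) 0.
Definition ptD (t : tau) : pt := Pt (w1 t) (w2 t) (tt t).
Definition ptM (t : tau) : pt := Pt (1/2) 0 0.

(** LEB maps, as relations (τ' is a possible value of Φ(τ), τ ∈ 𝒯). *)
Definition PhiL (t t' : tau) : Prop :=
  inT t /\ is_normalization (Tetra (ptA t) (ptM t) (ptC t) (ptD t)) t'.
Definition PhiR (t t' : tau) : Prop :=
  inT t /\ is_normalization (Tetra (ptM t) (ptB t) (ptC t) (ptD t)) t'.

Inductive orbit (t0 : tau) : tau -> Prop :=
  | orbit_refl : orbit t0 t0
  | orbit_L : forall s s', orbit t0 s -> PhiL s s' -> orbit t0 s'
  | orbit_R : forall s s', orbit t0 s -> PhiR s s' -> orbit t0 s'.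

Definition tauR : tau := Tau (1/2) (sqrt 3 / 2) (1/2) (sqrt 3 / 6) (sqrt 6 / 3).
Definition tauC : tau := Tau (1/2) (1/2) (1/2) (1/2) (sqrt 2 / 2).
Definition cube_corner : tetra :=
  Tetra (Pt 0 0 0) (Pt 1 0 0) (Pt 0 1 0) (Pt 0 0 1).

Definition tau1 : tau := Tau (1/4) (sqrt 3 / 4) (1/2) (sqrt 3 / 6) (sqrt 6 / 3).
Definition tau2 : tau := Tau (1/4) (sqrt 3 / 4) (1/2) (sqrt 3 / 3) (sqrt 6 / 6).
Definition tau3 : tau := Tau (1/2) (sqrt 3 / 6) (1/3) 0 (sqrt 2 / 3).
Definition tau4 : tau := Tau (1/2) (sqrt 2 / 4) (1/2) (sqrt 2 / 4) (sqrt 2 / 4).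
Definition tau5 : tau := Tau (1/4) (sqrt 3 / 4) (1/2) (sqrt 3 / 6) (sqrt 6 / 6).
Definition tau6 : tau := Tau (1/2) (1/2) (1/2) 0 (1/2).

(* Main.v *)
Require Import Defs.
From Stdlib Require Import Reals Lra Psatz Permutation List.
Import ListNotations.
Open Scope R_scope.

Lemma sqrt6_eq : sqrt 6 = sqrt 2 * sqrt 3.
Proof. rewrite <- sqrt_mult by lra. f_equal; lra. Qed.

Ltac prep :=
  unfold dist2, dot, vsub, det3, ptA, ptB, ptC, ptD, ptM, tauR, tauC, tau1, tau2, tau3, tau4, tau5, tau6 in *;
  cbn [px py pz z1 z2 w1 w2 tt] in *;
  rewrite ?sqrt6_eq;
  let H2 := fresh in let H3 := fresh in
  pose proof (sqrt_sqrt 2 ltac:(lra)) as H2;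
  pose proof (sqrt_sqrt 3 ltac:(lra)) as H3;
  pose proof (sqrt_lt_R0 2 ltac:(lra));
  pose proof (sqrt_lt_R0 3 ltac:(lra));
  generalize dependent (sqrt 2); generalize dependent (sqrt 3); intros b ? ? a ? ?.

Ltac num := prep; repeat split; nra.

Lemma dist2_refl : forall X, dist2 X X = 0.
Proof. intros [x y z]; unfold dist2, dot, vsub; cbn; ring. Qed.

Lemma perm3 : forall (T : Type) (a b c p q r : T),
  Permutation [a;b;c] [p;q;r] ->
  (a = p /\ b = q /\ c = r) \/ (a = p /\ b = r /\ c = q) \/
  (a = q /\ b = p /\ c = r) \/ (a = q /\ b = r /\ c = p) \/
  (a = r /\ b = p /\ c = q) \/ (a = r /\ b = q /\ c = p).
Proof.
  intros T a b c p q r H.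
  assert (Hin : In a [p;q;r]) by (eapply Permutation_in; [exact H| left; reflexivity]).
  destruct Hin as [<-|[<-|[<-|[]]]].
  - apply Permutation_cons_inv in H. apply Permutation_length_2 in H. tauto.
  - apply (@Permutation_cons_app_inv _ _ [p] [r] _) in H. apply Permutation_length_2 in H. tauto.
  - apply (@Permutation_cons_app_inv _ _ [p;q] [] _) in H. apply Permutation_length_2 in H. tauto.
Qed.

Lemma perm4 : forall (T : Type) (a b c d p q r s : T),
  Permutation [a;b;c;d] [p;q;r;s] ->
  (a = p /\ Permutation [b;c;d] [q;r;s]) \/
  (a = q /\ Permutation [b;c;d] [p;r;s]) \/
  (a = r /\ Permutation [b;c;d] [p;q;s]) \/
  (a = s /\ Permutation [b;c;d] [p;q;r]).
Proof.
  intros T a b c d p q r s H.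
  assert (Hin : In a [p;q;r;s]) by (eapply Permutation_in; [exact H| left; reflexivity]).
  destruct Hin as [<-|[<-|[<-|[<-|[]]]]].
  - apply Permutation_cons_inv in H. tauto.
  - apply (@Permutation_cons_app_inv _ _ [p] [r;s] _) in H. tauto.
  - apply (@Permutation_cons_app_inv _ _ [p;q] [s] _) in H. tauto.
  - apply (@Permutation_cons_app_inv _ _ [p;q;r] [] _) in H. tauto.
Qed.

Ltac perm_cases H :=
  apply perm4 in H;
  repeat match goal with H : _ \/ _ |- _ => destruct H end;
  repeat match goal with H : _ /\ _ |- _ => destruct H end;
  repeat match goal with H : Permutation [_;_;_] [_;_;_] |- _ => apply perm3 in H end;
  repeat match goal with H : _ \/ _ |- _ => destruct H end;
  repeat match goal with H : _ /\ _ |- _ => destruct H end; subst.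

Ltac psolve :=
  first [ apply Permutation_refl |
  match goal with
  | |- Permutation [] [] => apply perm_nil
  | |- Permutation (?a :: _) _ =>
      first [ apply (@Permutation_cons_app _ _ [] _ _)
            | apply (@Permutation_cons_app _ _ [_] _ _)
            | apply (@Permutation_cons_app _ _ [_;_] _ _)
            | apply (@Permutation_cons_app _ _ [_;_;_] _ _) ]; simpl app; psolve
  end ].

Lemma acos_noninc : forall x y, x <= y -> acos y <= acos x.
Proof.
  intros x y Hxy.
  destruct (Rlt_or_le x (-1)) as [Hx|Hx].
  { assert (acos x = PI) by (unfold acos; destruct (Rle_dec x (-1)); [reflexivity|lra]).
    pose proof (acos_bound y); lra. }
  destruct (Rlt_or_le 1 y) as [Hy|Hy].
  { assert (acos y = 0).
    { unfold acos; destruct (Rle_dec y (-1)); [lra|]. destruct (Rle_dec 1 y); [reflexivity|lra]. }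
    pose proof (acos_bound x); lra. }
  destruct (Rle_or_lt (acos y) (acos x)) as [H|H]; [exact H|].
  exfalso.
  pose proof (acos_bound x); pose proof (acos_bound y).
  pose proof (cos_decreasing_1 (acos x) (acos y) ltac:(lra) ltac:(lra) ltac:(lra) ltac:(lra) H).
  rewrite !cos_acos in H2 by lra. lra.
Qed.

Lemma dot_polar : forall A B C,
  dot (vsub B A) (vsub C A) = (dist2 A B + dist2 A C - dist2 B C) / 2.
Proof. intros [] [] []; unfold dist2, dot, vsub; cbn; field. Qed.

Lemma angle_le : forall A B C A' B' C',
  dist2 A B = dist2 A' B' -> dist2 A C = dist2 A' C' ->
  dist2 A' B' + dist2 A' C' - dist2 B' C' <= dist2 A B + dist2 A C - dist2 B C ->
  angle B A C <= angle B' A' C'.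
Proof.
  intros A B C A' B' C' H1 H2 H3. unfold angle.
  rewrite !dot_polar, H1, H2. apply acos_noninc.
  unfold Rdiv. apply Rmult_le_compat_r.
  - destruct (Req_dec (sqrt (dist2 A' B') * sqrt (dist2 A' C')) 0) as [E|E].
    + rewrite E, Rinv_0; lra.
    + left; apply Rinv_0_lt_compat.
      pose proof (sqrt_pos (dist2 A' B')); pose proof (sqrt_pos (dist2 A' C')).
      assert (0 <= sqrt (dist2 A' B') * sqrt (dist2 A' C')) by (apply Rmult_le_pos; lra).
      lra.
  - lra.
Qed.

Ltac inv_tac unf :=
  try unfold cube_corner in *; cbv [verts v0 v1 v2 v3 In]; simpl; intuition.

Ltac adm_tac db P Q :=
  split;
  [ split;
    [ unfold labelling; try unfold cube_corner in *; cbv [verts v0 v1 v2 v3]; psolve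
    | split;
      [ intros X Y HX HY; try unfold cube_corner in *; cbv [verts v0 v1 v2 v3 In] in HX, HY;
        destruct HX as [<-|[<-|[<-|[<-|[]]]]]; destruct HY as [<-|[<-|[<-|[<-|[]]]]];
        autorewrite with db; lra
      | autorewrite with db; repeat split; lra ] ]
  | split;
    [ intros A' B' C' D' [Hp [Hm [h1 [h2 h3]]]];
      try unfold cube_corner in *; cbv [labelling verts v0 v1 v2 v3] in Hp, Hm;
      pose proof (Hm P Q ltac:(simpl; intuition) ltac:(simpl; intuition)) as Hmax; clear Hm;
      perm_cases Hp; autorewrite with db in *; lra
    | intros A' B' C' D' [Hp [Hm [h1 [h2 h3]]]] Heq;
      try unfold cube_corner in *; cbv [labelling verts v0 v1 v2 v3] in Hp, Hm;
      pose proof (Hm P Q ltac:(simpl; intuition) ltac:(simpl; intuition)) as Hmax; clear Hm;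
      perm_cases Hp; autorewrite with db in *;
      first [ lra | apply angle_le; autorewrite with db; lra ] ] ].

Ltac fin_tac := rewrite Rabs_pos_eq; [reflexivity | num].
Lemma d_cube_ab : dist2 (Pt 0 0 0) (Pt 1 0 0) = 1.
Proof. num. Qed.
#[local] Hint Rewrite d_cube_ab : dbcube.
Lemma d_cube_ac : dist2 (Pt 0 0 0) (Pt 0 1 0) = 1.
Proof. num. Qed.
#[local] Hint Rewrite d_cube_ac : dbcube.
Lemma d_cube_ad : dist2 (Pt 0 0 0) (Pt 0 0 1) = 1.
Proof. num. Qed.
#[local] Hint Rewrite d_cube_ad : dbcube.
Lemma d_cube_ba : dist2 (Pt 1 0 0) (Pt 0 0 0) = 1.
Proof. num. Qed.
#[local] Hint Rewrite d_cube_ba : dbcube.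
Lemma d_cube_bc : dist2 (Pt 1 0 0) (Pt 0 1 0) = 2.
Proof. num. Qed.
#[local] Hint Rewrite d_cube_bc : dbcube.
Lemma d_cube_bd : dist2 (Pt 1 0 0) (Pt 0 0 1) = 2.
Proof. num. Qed.
#[local] Hint Rewrite d_cube_bd : dbcube.
Lemma d_cube_ca : dist2 (Pt 0 1 0) (Pt 0 0 0) = 1.
Proof. num. Qed.
#[local] Hint Rewrite d_cube_ca : dbcube.
Lemma d_cube_cb : dist2 (Pt 0 1 0) (Pt 1 0 0) = 2.
Proof. num. Qed.
#[local] Hint Rewrite d_cube_cb : dbcube.
Lemma d_cube_cd : dist2 (Pt 0 1 0) (Pt 0 0 1) = 2.
Proof. num. Qed.
#[local] Hint Rewrite d_cube_cd : dbcube.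
Lemma d_cube_da : dist2 (Pt 0 0 1) (Pt 0 0 0) = 1.
Proof. num. Qed.
#[local] Hint Rewrite d_cube_da : dbcube.
Lemma d_cube_db : dist2 (Pt 0 0 1) (Pt 1 0 0) = 2.
Proof. num. Qed.
#[local] Hint Rewrite d_cube_db : dbcube.
Lemma d_cube_dc : dist2 (Pt 0 0 1) (Pt 0 1 0) = 2.
Proof. num. Qed.
#[local] Hint Rewrite d_cube_dc : dbcube.
#[local] Hint Rewrite dist2_refl : dbcube.
Lemma norm_cube : is_normalization cube_corner tauC.
Proof.
  split.
  { unfold nondegenerate; unfold cube_corner; cbn [v0 v1 v2 v3]; num. }
  exists (Pt 1 0 0), (Pt 0 1 0), (Pt 0 0 0), (Pt 0 0 1), (z1 tauC), (z2 tauC), (w1 tauC), (w2 tauC), (tt tauC).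
  split; [|split].
  - adm_tac dbcube (Pt 0 0 1) (Pt 0 1 0).
  - unfold normal_coords; cbv zeta; autorewrite with dbcube; num.
  - fin_tac.
Qed.
Lemma d_RL_AM : dist2 (ptA tauR) (ptM tauR) = (1/4).
Proof. num. Qed.
#[local] Hint Rewrite d_RL_AM : dbRL.
Lemma d_RL_AC : dist2 (ptA tauR) (ptC tauR) = 1.
Proof. num. Qed.
#[local] Hint Rewrite d_RL_AC : dbRL.
Lemma d_RL_AD : dist2 (ptA tauR) (ptD tauR) = 1.
Proof. num. Qed.
#[local] Hint Rewrite d_RL_AD : dbRL.
Lemma d_RL_MA : dist2 (ptM tauR) (ptA tauR) = (1/4).
Proof. num. Qed.
#[local] Hint Rewrite d_RL_MA : dbRL.
Lemma d_RL_MC : dist2 (ptM tauR) (ptC tauR) = (3/4).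
Proof. num. Qed.
#[local] Hint Rewrite d_RL_MC : dbRL.
Lemma d_RL_MD : dist2 (ptM tauR) (ptD tauR) = (3/4).
Proof. num. Qed.
#[local] Hint Rewrite d_RL_MD : dbRL.
Lemma d_RL_CA : dist2 (ptC tauR) (ptA tauR) = 1.
Proof. num. Qed.
#[local] Hint Rewrite d_RL_CA : dbRL.
Lemma d_RL_CM : dist2 (ptC tauR) (ptM tauR) = (3/4).
Proof. num. Qed.
#[local] Hint Rewrite d_RL_CM : dbRL.
Lemma d_RL_CD : dist2 (ptC tauR) (ptD tauR) = 1.
Proof. num. Qed.
#[local] Hint Rewrite d_RL_CD : dbRL.
Lemma d_RL_DA : dist2 (ptD tauR) (ptA tauR) = 1.
Proof. num. Qed.
#[local] Hint Rewrite d_RL_DA : dbRL.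
Lemma d_RL_DM : dist2 (ptD tauR) (ptM tauR) = (3/4).
Proof. num. Qed.
#[local] Hint Rewrite d_RL_DM : dbRL.
Lemma d_RL_DC : dist2 (ptD tauR) (ptC tauR) = 1.
Proof. num. Qed.
#[local] Hint Rewrite d_RL_DC : dbRL.
#[local] Hint Rewrite dist2_refl : dbRL.
Lemma norm_RL : is_normalization (Tetra (ptA tauR) (ptM tauR) (ptC tauR) (ptD tauR)) tau1.
Proof.
  split.
  { unfold nondegenerate; cbn [v0 v1 v2 v3]; num. }
  exists (ptA tauR), (ptC tauR), (ptM tauR), (ptD tauR), (z1 tau1), (z2 tau1), (w1 tau1), (w2 tau1), (tt tau1).
  split; [|split].
  - adm_tac dbRL (ptC tauR) (ptA tauR).
  - unfold normal_coords; cbv zeta; autorewrite with dbRL; num.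
  - fin_tac.
Qed.
Lemma d_RR_MB : dist2 (ptM tauR) (ptB tauR) = (1/4).
Proof. num. Qed.
#[local] Hint Rewrite d_RR_MB : dbRR.
Lemma d_RR_MC : dist2 (ptM tauR) (ptC tauR) = (3/4).
Proof. num. Qed.
#[local] Hint Rewrite d_RR_MC : dbRR.
Lemma d_RR_MD : dist2 (ptM tauR) (ptD tauR) = (3/4).
Proof. num. Qed.
#[local] Hint Rewrite d_RR_MD : dbRR.
Lemma d_RR_BM : dist2 (ptB tauR) (ptM tauR) = (1/4).
Proof. num. Qed.
#[local] Hint Rewrite d_RR_BM : dbRR.
Lemma d_RR_BC : dist2 (ptB tauR) (ptC tauR) = 1.
Proof. num. Qed.
#[local] Hint Rewrite d_RR_BC : dbRR.
Lemma d_RR_BD : dist2 (ptB tauR) (ptD tauR) = 1.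
Proof. num. Qed.
#[local] Hint Rewrite d_RR_BD : dbRR.
Lemma d_RR_CM : dist2 (ptC tauR) (ptM tauR) = (3/4).
Proof. num. Qed.
#[local] Hint Rewrite d_RR_CM : dbRR.
Lemma d_RR_CB : dist2 (ptC tauR) (ptB tauR) = 1.
Proof. num. Qed.
#[local] Hint Rewrite d_RR_CB : dbRR.
Lemma d_RR_CD : dist2 (ptC tauR) (ptD tauR) = 1.
Proof. num. Qed.
#[local] Hint Rewrite d_RR_CD : dbRR.
Lemma d_RR_DM : dist2 (ptD tauR) (ptM tauR) = (3/4).
Proof. num. Qed.
#[local] Hint Rewrite d_RR_DM : dbRR.
Lemma d_RR_DB : dist2 (ptD tauR) (ptB tauR) = 1.
Proof. num. Qed.
#[local] Hint Rewrite d_RR_DB : dbRR.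
Lemma d_RR_DC : dist2 (ptD tauR) (ptC tauR) = 1.
Proof. num. Qed.
#[local] Hint Rewrite d_RR_DC : dbRR.
#[local] Hint Rewrite dist2_refl : dbRR.
Lemma norm_RR : is_normalization (Tetra (ptM tauR) (ptB tauR) (ptC tauR) (ptD tauR)) tau1.
Proof.
  split.
  { unfold nondegenerate; cbn [v0 v1 v2 v3]; num. }
  exists (ptB tauR), (ptC tauR), (ptM tauR), (ptD tauR), (z1 tau1), (z2 tau1), (w1 tau1), (w2 tau1), (tt tau1).
  split; [|split].
  - adm_tac dbRR (ptC tauR) (ptB tauR).
  - unfold normal_coords; cbv zeta; autorewrite with dbRR; num.
  - fin_tac.
Qed.
Lemma d_1R_MB : dist2 (ptM tau1) (ptB tau1) = (1/4).
Proof. num. Qed.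
#[local] Hint Rewrite d_1R_MB : db1R.
Lemma d_1R_MC : dist2 (ptM tau1) (ptC tau1) = (1/4).
Proof. num. Qed.
#[local] Hint Rewrite d_1R_MC : db1R.
Lemma d_1R_MD : dist2 (ptM tau1) (ptD tau1) = (3/4).
Proof. num. Qed.
#[local] Hint Rewrite d_1R_MD : db1R.
Lemma d_1R_BM : dist2 (ptB tau1) (ptM tau1) = (1/4).
Proof. num. Qed.
#[local] Hint Rewrite d_1R_BM : db1R.
Lemma d_1R_BC : dist2 (ptB tau1) (ptC tau1) = (3/4).
Proof. num. Qed.
#[local] Hint Rewrite d_1R_BC : db1R.
Lemma d_1R_BD : dist2 (ptB tau1) (ptD tau1) = 1.
Proof. num. Qed.
#[local] Hint Rewrite d_1R_BD : db1R.
Lemma d_1R_CM : dist2 (ptC tau1) (ptM tau1) = (1/4).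
Proof. num. Qed.
#[local] Hint Rewrite d_1R_CM : db1R.
Lemma d_1R_CB : dist2 (ptC tau1) (ptB tau1) = (3/4).
Proof. num. Qed.
#[local] Hint Rewrite d_1R_CB : db1R.
Lemma d_1R_CD : dist2 (ptC tau1) (ptD tau1) = (3/4).
Proof. num. Qed.
#[local] Hint Rewrite d_1R_CD : db1R.
Lemma d_1R_DM : dist2 (ptD tau1) (ptM tau1) = (3/4).
Proof. num. Qed.
#[local] Hint Rewrite d_1R_DM : db1R.
Lemma d_1R_DB : dist2 (ptD tau1) (ptB tau1) = 1.
Proof. num. Qed.
#[local] Hint Rewrite d_1R_DB : db1R.
Lemma d_1R_DC : dist2 (ptD tau1) (ptC tau1) = (3/4).
Proof. num. Qed.
#[local] Hint Rewrite d_1R_DC : db1R.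
#[local] Hint Rewrite dist2_refl : db1R.
Lemma norm_1R : is_normalization (Tetra (ptM tau1) (ptB tau1) (ptC tau1) (ptD tau1)) tau2.
Proof.
  split.
  { unfold nondegenerate; cbn [v0 v1 v2 v3]; num. }
  exists (ptB tau1), (ptD tau1), (ptM tau1), (ptC tau1), (z1 tau2), (z2 tau2), (w1 tau2), (w2 tau2), (tt tau2).
  split; [|split].
  - adm_tac db1R (ptD tau1) (ptB tau1).
  - unfold normal_coords; cbv zeta; autorewrite with db1R; num.
  - fin_tac.
Qed.
Lemma d_2L_AM : dist2 (ptA tau2) (ptM tau2) = (1/4).
Proof. num. Qed.
#[local] Hint Rewrite d_2L_AM : db2L.
Lemma d_2L_AC : dist2 (ptA tau2) (ptC tau2) = (1/4).
Proof. num. Qed.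
#[local] Hint Rewrite d_2L_AC : db2L.
Lemma d_2L_AD : dist2 (ptA tau2) (ptD tau2) = (3/4).
Proof. num. Qed.
#[local] Hint Rewrite d_2L_AD : db2L.
Lemma d_2L_MA : dist2 (ptM tau2) (ptA tau2) = (1/4).
Proof. num. Qed.
#[local] Hint Rewrite d_2L_MA : db2L.
Lemma d_2L_MC : dist2 (ptM tau2) (ptC tau2) = (1/4).
Proof. num. Qed.
#[local] Hint Rewrite d_2L_MC : db2L.
Lemma d_2L_MD : dist2 (ptM tau2) (ptD tau2) = (1/2).
Proof. num. Qed.
#[local] Hint Rewrite d_2L_MD : db2L.
Lemma d_2L_CA : dist2 (ptC tau2) (ptA tau2) = (1/4).
Proof. num. Qed.
#[local] Hint Rewrite d_2L_CA : db2L.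
Lemma d_2L_CM : dist2 (ptC tau2) (ptM tau2) = (1/4).
Proof. num. Qed.
#[local] Hint Rewrite d_2L_CM : db2L.
Lemma d_2L_CD : dist2 (ptC tau2) (ptD tau2) = (1/4).
Proof. num. Qed.
#[local] Hint Rewrite d_2L_CD : db2L.
Lemma d_2L_DA : dist2 (ptD tau2) (ptA tau2) = (3/4).
Proof. num. Qed.
#[local] Hint Rewrite d_2L_DA : db2L.
Lemma d_2L_DM : dist2 (ptD tau2) (ptM tau2) = (1/2).
Proof. num. Qed.
#[local] Hint Rewrite d_2L_DM : db2L.
Lemma d_2L_DC : dist2 (ptD tau2) (ptC tau2) = (1/4).
Proof. num. Qed.
#[local] Hint Rewrite d_2L_DC : db2L.
#[local] Hint Rewrite dist2_refl : db2L.
Lemma norm_2L : is_normalization (Tetra (ptA tau2) (ptM tau2) (ptC tau2) (ptD tau2)) tau3.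
Proof.
  split.
  { unfold nondegenerate; cbn [v0 v1 v2 v3]; num. }
  exists (ptA tau2), (ptD tau2), (ptC tau2), (ptM tau2), (z1 tau3), (z2 tau3), (w1 tau3), (w2 tau3), (tt tau3).
  split; [|split].
  - adm_tac db2L (ptD tau2) (ptA tau2).
  - unfold normal_coords; cbv zeta; autorewrite with db2L; num.
  - fin_tac.
Qed.
Lemma d_3R_MB : dist2 (ptM tau3) (ptB tau3) = (1/4).
Proof. num. Qed.
#[local] Hint Rewrite d_3R_MB : db3R.
Lemma d_3R_MC : dist2 (ptM tau3) (ptC tau3) = (1/12).
Proof. num. Qed.
#[local] Hint Rewrite d_3R_MC : db3R.
Lemma d_3R_MD : dist2 (ptM tau3) (ptD tau3) = (1/4).
Proof. num. Qed.
#[local] Hint Rewrite d_3R_MD : db3R.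
Lemma d_3R_BM : dist2 (ptB tau3) (ptM tau3) = (1/4).
Proof. num. Qed.
#[local] Hint Rewrite d_3R_BM : db3R.
Lemma d_3R_BC : dist2 (ptB tau3) (ptC tau3) = (1/3).
Proof. num. Qed.
#[local] Hint Rewrite d_3R_BC : db3R.
Lemma d_3R_BD : dist2 (ptB tau3) (ptD tau3) = (2/3).
Proof. num. Qed.
#[local] Hint Rewrite d_3R_BD : db3R.
Lemma d_3R_CM : dist2 (ptC tau3) (ptM tau3) = (1/12).
Proof. num. Qed.
#[local] Hint Rewrite d_3R_CM : db3R.
Lemma d_3R_CB : dist2 (ptC tau3) (ptB tau3) = (1/3).
Proof. num. Qed.
#[local] Hint Rewrite d_3R_CB : db3R.
Lemma d_3R_CD : dist2 (ptC tau3) (ptD tau3) = (1/3).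
Proof. num. Qed.
#[local] Hint Rewrite d_3R_CD : db3R.
Lemma d_3R_DM : dist2 (ptD tau3) (ptM tau3) = (1/4).
Proof. num. Qed.
#[local] Hint Rewrite d_3R_DM : db3R.
Lemma d_3R_DB : dist2 (ptD tau3) (ptB tau3) = (2/3).
Proof. num. Qed.
#[local] Hint Rewrite d_3R_DB : db3R.
Lemma d_3R_DC : dist2 (ptD tau3) (ptC tau3) = (1/3).
Proof. num. Qed.
#[local] Hint Rewrite d_3R_DC : db3R.
#[local] Hint Rewrite dist2_refl : db3R.
Lemma norm_3R : is_normalization (Tetra (ptM tau3) (ptB tau3) (ptC tau3) (ptD tau3)) tau4.
Proof.
  split.
  { unfold nondegenerate; cbn [v0 v1 v2 v3]; num. }
  exists (ptB tau3), (ptD tau3), (ptM tau3), (ptC tau3), (z1 tau4), (z2 tau4), (w1 tau4), (w2 tau4), (tt tau4).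
  split; [|split].
  - adm_tac db3R (ptD tau3) (ptB tau3).
  - unfold normal_coords; cbv zeta; autorewrite with db3R; num.
  - fin_tac.
Qed.
Lemma d_4L_AM : dist2 (ptA tau4) (ptM tau4) = (1/4).
Proof. num. Qed.
#[local] Hint Rewrite d_4L_AM : db4L.
Lemma d_4L_AC : dist2 (ptA tau4) (ptC tau4) = (3/8).
Proof. num. Qed.
#[local] Hint Rewrite d_4L_AC : db4L.
Lemma d_4L_AD : dist2 (ptA tau4) (ptD tau4) = (1/2).
Proof. num. Qed.
#[local] Hint Rewrite d_4L_AD : db4L.
Lemma d_4L_MA : dist2 (ptM tau4) (ptA tau4) = (1/4).
Proof. num. Qed.
#[local] Hint Rewrite d_4L_MA : db4L.
Lemma d_4L_MC : dist2 (ptM tau4) (ptC tau4) = (1/8).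
Proof. num. Qed.
#[local] Hint Rewrite d_4L_MC : db4L.
Lemma d_4L_MD : dist2 (ptM tau4) (ptD tau4) = (1/4).
Proof. num. Qed.
#[local] Hint Rewrite d_4L_MD : db4L.
Lemma d_4L_CA : dist2 (ptC tau4) (ptA tau4) = (3/8).
Proof. num. Qed.
#[local] Hint Rewrite d_4L_CA : db4L.
Lemma d_4L_CM : dist2 (ptC tau4) (ptM tau4) = (1/8).
Proof. num. Qed.
#[local] Hint Rewrite d_4L_CM : db4L.
Lemma d_4L_CD : dist2 (ptC tau4) (ptD tau4) = (1/8).
Proof. num. Qed.
#[local] Hint Rewrite d_4L_CD : db4L.
Lemma d_4L_DA : dist2 (ptD tau4) (ptA tau4) = (1/2).
Proof. num. Qed.
#[local] Hint Rewrite d_4L_DA : db4L.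
Lemma d_4L_DM : dist2 (ptD tau4) (ptM tau4) = (1/4).
Proof. num. Qed.
#[local] Hint Rewrite d_4L_DM : db4L.
Lemma d_4L_DC : dist2 (ptD tau4) (ptC tau4) = (1/8).
Proof. num. Qed.
#[local] Hint Rewrite d_4L_DC : db4L.
#[local] Hint Rewrite dist2_refl : db4L.
Lemma norm_4L : is_normalization (Tetra (ptA tau4) (ptM tau4) (ptC tau4) (ptD tau4)) tau5.
Proof.
  split.
  { unfold nondegenerate; cbn [v0 v1 v2 v3]; num. }
  exists (ptD tau4), (ptA tau4), (ptC tau4), (ptM tau4), (z1 tau5), (z2 tau5), (w1 tau5), (w2 tau5), (tt tau5).
  split; [|split].
  - adm_tac db4L (ptD tau4) (ptA tau4).
  - unfold normal_coords; cbv zeta; autorewrite with db4L; num.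
  - fin_tac.
Qed.
Lemma d_5L_AM : dist2 (ptA tau5) (ptM tau5) = (1/4).
Proof. num. Qed.
#[local] Hint Rewrite d_5L_AM : db5L.
Lemma d_5L_AC : dist2 (ptA tau5) (ptC tau5) = (1/4).
Proof. num. Qed.
#[local] Hint Rewrite d_5L_AC : db5L.
Lemma d_5L_AD : dist2 (ptA tau5) (ptD tau5) = (1/2).
Proof. num. Qed.
#[local] Hint Rewrite d_5L_AD : db5L.
Lemma d_5L_MA : dist2 (ptM tau5) (ptA tau5) = (1/4).
Proof. num. Qed.
#[local] Hint Rewrite d_5L_MA : db5L.
Lemma d_5L_MC : dist2 (ptM tau5) (ptC tau5) = (1/4).
Proof. num. Qed.
#[local] Hint Rewrite d_5L_MC : db5L.
Lemma d_5L_MD : dist2 (ptM tau5) (ptD tau5) = (1/4).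
Proof. num. Qed.
#[local] Hint Rewrite d_5L_MD : db5L.
Lemma d_5L_CA : dist2 (ptC tau5) (ptA tau5) = (1/4).
Proof. num. Qed.
#[local] Hint Rewrite d_5L_CA : db5L.
Lemma d_5L_CM : dist2 (ptC tau5) (ptM tau5) = (1/4).
Proof. num. Qed.
#[local] Hint Rewrite d_5L_CM : db5L.
Lemma d_5L_CD : dist2 (ptC tau5) (ptD tau5) = (1/4).
Proof. num. Qed.
#[local] Hint Rewrite d_5L_CD : db5L.
Lemma d_5L_DA : dist2 (ptD tau5) (ptA tau5) = (1/2).
Proof. num. Qed.
#[local] Hint Rewrite d_5L_DA : db5L.
Lemma d_5L_DM : dist2 (ptD tau5) (ptM tau5) = (1/4).
Proof. num. Qed.
#[local] Hint Rewrite d_5L_DM : db5L.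
Lemma d_5L_DC : dist2 (ptD tau5) (ptC tau5) = (1/4).
Proof. num. Qed.
#[local] Hint Rewrite d_5L_DC : db5L.
#[local] Hint Rewrite dist2_refl : db5L.
Lemma norm_5L : is_normalization (Tetra (ptA tau5) (ptM tau5) (ptC tau5) (ptD tau5)) tau6.
Proof.
  split.
  { unfold nondegenerate; cbn [v0 v1 v2 v3]; num. }
  exists (ptA tau5), (ptD tau5), (ptM tau5), (ptC tau5), (z1 tau6), (z2 tau6), (w1 tau6), (w2 tau6), (tt tau6).
  split; [|split].
  - adm_tac db5L (ptD tau5) (ptA tau5).
  - unfold normal_coords; cbv zeta; autorewrite with db5L; num.
  - fin_tac.
Qed.
Lemma d_6L_AM : dist2 (ptA tau6) (ptM tau6) = (1/4).
Proof. num. Qed.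
#[local] Hint Rewrite d_6L_AM : db6L.
Lemma d_6L_AC : dist2 (ptA tau6) (ptC tau6) = (1/2).
Proof. num. Qed.
#[local] Hint Rewrite d_6L_AC : db6L.
Lemma d_6L_AD : dist2 (ptA tau6) (ptD tau6) = (1/2).
Proof. num. Qed.
#[local] Hint Rewrite d_6L_AD : db6L.
Lemma d_6L_MA : dist2 (ptM tau6) (ptA tau6) = (1/4).
Proof. num. Qed.
#[local] Hint Rewrite d_6L_MA : db6L.
Lemma d_6L_MC : dist2 (ptM tau6) (ptC tau6) = (1/4).
Proof. num. Qed.
#[local] Hint Rewrite d_6L_MC : db6L.
Lemma d_6L_MD : dist2 (ptM tau6) (ptD tau6) = (1/4).
Proof. num. Qed.
#[local] Hint Rewrite d_6L_MD : db6L.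
Lemma d_6L_CA : dist2 (ptC tau6) (ptA tau6) = (1/2).
Proof. num. Qed.
#[local] Hint Rewrite d_6L_CA : db6L.
Lemma d_6L_CM : dist2 (ptC tau6) (ptM tau6) = (1/4).
Proof. num. Qed.
#[local] Hint Rewrite d_6L_CM : db6L.
Lemma d_6L_CD : dist2 (ptC tau6) (ptD tau6) = (1/2).
Proof. num. Qed.
#[local] Hint Rewrite d_6L_CD : db6L.
Lemma d_6L_DA : dist2 (ptD tau6) (ptA tau6) = (1/2).
Proof. num. Qed.
#[local] Hint Rewrite d_6L_DA : db6L.
Lemma d_6L_DM : dist2 (ptD tau6) (ptM tau6) = (1/4).
Proof. num. Qed.
#[local] Hint Rewrite d_6L_DM : db6L.
Lemma d_6L_DC : dist2 (ptD tau6) (ptC tau6) = (1/2).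
Proof. num. Qed.
#[local] Hint Rewrite d_6L_DC : db6L.
#[local] Hint Rewrite dist2_refl : db6L.
Lemma norm_6L : is_normalization (Tetra (ptA tau6) (ptM tau6) (ptC tau6) (ptD tau6)) tauC.
Proof.
  split.
  { unfold nondegenerate; cbn [v0 v1 v2 v3]; num. }
  exists (ptA tau6), (ptC tau6), (ptM tau6), (ptD tau6), (z1 tauC), (z2 tauC), (w1 tauC), (w2 tauC), (tt tauC).
  split; [|split].
  - adm_tac db6L (ptD tau6) (ptC tau6).
  - unfold normal_coords; cbv zeta; autorewrite with db6L; num.
  - fin_tac.
Qed.
Ltac inT_tac := unfold inT, inB, inV; cbv zeta; num.
Lemma inT_R : inT tauR. Proof. inT_tac. Qed.
Lemma inT_1 : inT tau1. Proof. inT_tac. Qed.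
Lemma inT_2 : inT tau2. Proof. inT_tac. Qed.
Lemma inT_3 : inT tau3. Proof. inT_tac. Qed.
Lemma inT_4 : inT tau4. Proof. inT_tac. Qed.
Lemma inT_5 : inT tau5. Proof. inT_tac. Qed.
Lemma inT_6 : inT tau6. Proof. inT_tac. Qed.

Lemma orbit_trans : forall a b c, orbit a b -> orbit b c -> orbit a c.
Proof.
  intros a b c Hab Hbc. induction Hbc.
  - exact Hab.
  - eapply orbit_L; eauto.
  - eapply orbit_R; eauto.
Qed.

Theorem theorem3p4 :
  is_normalization cube_corner tauC /\
  orbit tauR tauC /\
  (forall s, orbit tauC s -> orbit tauR s) /\
  PhiL tauR tau1 /\ PhiR tauR tau1 /\
  PhiR tau1 tau2 /\ PhiL tau2 tau3 /\ PhiR tau3 tau4 /\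
  PhiL tau4 tau5 /\ PhiL tau5 tau6 /\ PhiL tau6 tauC.
Proof.
  assert (L1 : PhiL tauR tau1) by (split; [exact inT_R | exact norm_RL]).
  assert (L2 : PhiR tauR tau1) by (split; [exact inT_R | exact norm_RR]).
  assert (L3 : PhiR tau1 tau2) by (split; [exact inT_1 | exact norm_1R]).
  assert (L4 : PhiL tau2 tau3) by (split; [exact inT_2 | exact norm_2L]).
  assert (L5 : PhiR tau3 tau4) by (split; [exact inT_3 | exact norm_3R]).
  assert (L6 : PhiL tau4 tau5) by (split; [exact inT_4 | exact norm_4L]).
  assert (L7 : PhiL tau5 tau6) by (split; [exact inT_5 | exact norm_5L]).
  assert (L8 : PhiL tau6 tauC) by (split; [exact inT_6 | exact norm_6L]).
  assert (O : orbit tauR tauC).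
  { eapply orbit_L; [|exact L8].
    eapply orbit_L; [|exact L7].
    eapply orbit_L; [|exact L6].
    eapply orbit_R; [|exact L5].
    eapply orbit_L; [|exact L4].
    eapply orbit_R; [|exact L3].
    eapply orbit_L; [|exact L1].
    apply orbit_refl. }
  split; [exact norm_cube|].
  split; [exact O|].
  split; [intros s Hs; exact (orbit_trans _ _ _ O Hs)|].
  tauto.
Qed.
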